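(* Let $\rho$ be the automorphism of $\mathcal A_\theta^{alg}$ with $\rho\cdot U_1=U_2^{-1}$, $\rho\cdot U_2=U_1$, and let $H^0(\mathcal A_\theta^{alg},{}_{\rho}\mathcal A_\theta^{alg\ast})$ be the space of formal series $\varphi=\sum\varphi_{n,m}U_1^nU_2^m$ with $(\rho\cdot a)\varphi=\varphi a$ for all $a\in\mathcal A_\theta^{alg}$. Then every such $\varphi$ is determined by the two coefficients $\varphi_{0,0},\varphi_{0,1}$ (which generate the space), and: if $m+n\equiv0\pmod2$ then $\varphi_{n,m}=\lambda^{\frac{m^2+n^2+2mn}{4}}\varphi_{0,0}$; if $m+n\equiv1\pmod 2$ then $\varphi_{n,m}=\lambda^{\frac{m^2+n^2+2mn-1}{4}}\varphi_{0,1}$.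
   Context: Let $\theta\in\mathbb R\setminus\mathbb Q$, $\lambda=e^{2\pi i\theta}$, $\lambda^s:=e^{2\pi i\theta s}$. $\mathcal A_\theta^{alg}$ is the complex algebra of finite sums $\sum a_{n,m}U_1^nU_2^m$ with $U_1,U_2$ invertible and $U_2U_1=\lambda U_1U_2$; formal series $\sum_{(n,m)\in\mathbb Z^2}\varphi_{n,m}U_1^nU_2^m$ with arbitrary coefficients form an $\mathcal A_\theta^{alg}$-bimodule via left/right multiplication. The automorphism $\rho$ generates the copy of $\mathbb Z_4\subset SL(2,\mathbb Z)$ acting on $\mathcal A_\theta^{alg}$ (the paper denotes it $i$). *)

(* Defs.v *)
From HB Require Import structures.
From mathcomp Require Import all_boot all_order all_algebra.
From mathcomp Require Import reals trigo.
From mathcomp Require Import complex.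
Set Implicit Arguments. Unset Strict Implicit. Unset Printing Implicit Defensive.
Import Order.TTheory GRing.Theory Num.Theory.
Local Open Scope ring_scope.
Local Open Scope complex_scope.

Section NCTorus.
Variable R : realType.
Local Notation C := R[i].

Definition lam (theta : R) : C := (cos (2 * pi * theta)) +i* (sin (2 * pi * theta)).

(* Formal series  phi = sum_{(n,m) in Z^2} phi n m U1^n U2^m  (arbitrary coefficients). *)
Definition series := int -> int -> C.

(* Elements of A_theta^alg: finite sums  sum_k c_k U1^{n_k} U2^{m_k},
   encoded as a finite list of triples ((n_k, m_k), c_k). *)
Definition alg := seq ((int * int) * C).

Variable theta : R.
Local Notation l := (lam theta).

(* Left / right multiplication of a formal series by the generators and their
   inverses, computed from U2 U1 = lambda U1 U2 with normal form U1^n U2^m. *)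
Definition lU1 (f : series) : series := fun n m => f (n - 1) m.
Definition lU1inv (f : series) : series := fun n m => f (n + 1) m.
Definition lU2 (f : series) : series := fun n m => l ^ n * f n (m - 1).
Definition lU2inv (f : series) : series := fun n m => l ^ (- n) * f n (m + 1).
Definition rU1 (f : series) : series := fun n m => l ^ m * f (n - 1) m.
Definition rU1inv (f : series) : series := fun n m => l ^ (- m) * f (n + 1) m.
Definition rU2 (f : series) : series := fun n m => f n (m - 1).
Definition rU2inv (f : series) : series := fun n m => f n (m + 1).

Definition zpow (g ginv : series -> series) (k : int) (f : series) : series :=
  match k with
  | Posz j => iter j g f
  | Negz j => iter j.+1 ginv f
  end.

Definition sadd (f g : series) : series := fun n m => f n m + g n m.
Definition sscale (c : C) (f : series) : series := fun n m => c * f n m.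
Definition szero : series := fun _ _ => 0.

(* (U1^a U2^b) phi = U1^a (U2^b phi) *)
Definition lmono (a b : int) (f : series) : series :=
  zpow lU1 lU1inv a (zpow lU2 lU2inv b f).
(* phi (U1^a U2^b) = (phi U1^a) U2^b *)
Definition rmono (f : series) (a b : int) : series :=
  zpow rU2 rU2inv b (zpow rU1 rU1inv a f).

Definition lmul (x : alg) (f : series) : series :=
  foldr (fun t acc => sadd (sscale t.2 (lmono t.1.1 t.1.2 f)) acc) szero x.
Definition rmul (f : series) (x : alg) : series :=
  foldr (fun t acc => sadd (sscale t.2 (rmono f t.1.1 t.1.2)) acc) szero x.

(* The automorphism rho (rho U1 = U2^{-1}, rho U2 = U1) acting on the left:
   rho(U1^a U2^b) = (U2^{-1})^a U1^b, so left multiplication by rho(c U1^a U2^b)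
   is  c * L_{U2}^{-a} o L_{U1}^{b}. *)
Definition lmul_rho (x : alg) (f : series) : series :=
  foldr (fun t acc =>
           sadd (sscale t.2 (zpow lU2 lU2inv (- t.1.1) (zpow lU1 lU1inv t.1.2 f))) acc)
        szero x.

Definition H0_rho (f : series) : Prop :=
  forall x : alg, lmul_rho x f = rmul f x.

End NCTorus.

(* Main.v *)
Require Import Defs.
From HB Require Import structures.
From mathcomp Require Import all_boot all_order all_algebra.
From mathcomp Require Import reals trigo.
From mathcomp Require Import complex.
From mathcomp Require Import zify ring.
From Stdlib Require Import FunctionalExtensionality.
Import Order.TTheory GRing.Theory Num.Theory.
Local Open Scope ring_scope.
Set Implicit Arguments. Unset Strict Implicit.

Lemma lam_neq0 (R : realType) (theta : R) : lam theta != 0.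
Proof.
apply/eqP; rewrite /lam => -[hc hs].
have := cos2Dsin2 (2 * pi * theta); rewrite hc hs expr0n /= addr0.
by move/eqP; rewrite eq_sym oner_eq0.
Qed.

Lemma zpowE (R : realType) (g ginv : series R -> series R) (F : int -> series R) (f : series R) :
  F 0 = f -> (forall k, g (F k) = F (k + 1)) -> (forall k, ginv (F k) = F (k - 1)) ->
  forall k, zpow g ginv k f = F k.
Proof.
move=> F0 Hg Hi [j|j] /=.
  elim: j => [|j IH] /=; first by rewrite F0.
  by rewrite IH Hg; congr F; lia.
elim: j => [|j IH] /=; first by rewrite -F0 Hi.
by rewrite IH Hi; congr F; rewrite !NegzE; lia.
Qed.

Lemma parity (t : int) : exists j : int, t = j * 2 + (odd `|t|)%:Z.
Proof.
case: t => n /=.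
  have := odd_double_half n; rewrite -muln2.
  case: (odd n) => /= h; exists (n./2)%:Z; lia.
have := odd_double_half n.+1; rewrite -muln2.
case: (odd n.+1) => /= h.
  exists (- (n.+1./2)%:Z - 1); rewrite NegzE; lia.
exists (- (n.+1./2)%:Z); rewrite NegzE; lia.
Qed.

Lemma oddE (j : int) (b : bool) : odd `|j * 2 + (b : nat)%:Z| = b.
Proof.
have [j' h] := parity (j * 2 + (b : nat)%:Z).
move: h; case: b; case: (odd _) => //= h; lia.
Qed.

Lemma oddE0 (j : int) : odd `|j * 2| = false.
Proof. by have := oddE j false; rewrite /= addr0. Qed.
Lemma oddE1 (j : int) : odd `|j * 2 + 1| = true.
Proof. exact: (oddE j true). Qed.

Lemma div4 (x e : int) : x = e * 4 -> (x %/ 4)%Z = e.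
Proof. by move=> ->; rewrite mulzK. Qed.

Lemma lcomb (F : fieldType) (l : F) (hl : l != 0) (a b c : int) (x y : F) :
  c = a + b -> x = y -> l ^ a * (l ^ b * x) = l ^ c * y.
Proof. by move=> -> ->; rewrite mulrA -expfzDr. Qed.

Definition Rec (F : fieldType) (l : F) (g : int -> F) := forall k, g (k + 1) = l ^ k * g (k - 1).
Arguments Rec {F} l g.

Lemma genRec (F : fieldType) (l : F) (hl : l != 0) g : Rec l g ->
  forall a k, g (k + a) = l ^ (a * k) * g (k - a).
Proof.
move=> hr.
have pos : forall j : nat, forall k, g (k + j%:Z) = l ^ (j%:Z * k) * g (k - j%:Z).
  elim=> [|j IH] k; first by rewrite mul0r expr0z mul1r addr0 ?subr0.
  have -> : k + j.+1%:Z = (k + 1) + j%:Z by lia.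
  rewrite IH.
  have -> : k + 1 - j%:Z = (k - j%:Z) + 1 by lia.
  rewrite hr; apply: lcomb => //; first by rewrite -addn1 PoszD; ring.
  congr g; lia.
move=> [j|j] k; first exact: pos.
have := pos j.+1 k.
have -> : k + j.+1%:Z = k - Negz j by rewrite NegzE; lia.
have -> : k - j.+1%:Z = k + Negz j by rewrite NegzE; lia.
move=> ->; rewrite mulrA -expfzDr //.
have -> : Negz j * k + j.+1%:Z * k = 0 by rewrite NegzE; ring.
by rewrite expr0z mul1r.
Qed.

Definition Fm (F : fieldType) (l : F) (c0 c1 : F) (t : int) :=
  if ~~ odd `|t| then l ^ ((t ^+ 2) %/ 4)%Z * c0 else l ^ ((t ^+ 2 - 1) %/ 4)%Z * c1.
Arguments Fm {F} l c0 c1 t.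

Lemma recFormula (F : fieldType) (l : F) (hl : l != 0) g : Rec l g ->
  forall t, g t = Fm l (g 0) (g 1) t.
Proof.
move=> hr t; have gr := genRec hl hr.
have [j ht] := parity t; rewrite /Fm; move: ht.
case h: (odd _) => /= ->.
  rewrite (@div4 _ (j * (j + 1))); last ring.
  have := gr j (j + 1); rewrite (_ : j + 1 + j = j * 2 + 1); last ring.
  by rewrite (_ : j + 1 - j = 1) ?(addrC j) ?addrK // => ->; rewrite mulrC.
rewrite addr0 (@div4 _ (j * j)); last ring.
have := gr j j; rewrite (_ : j + j = j * 2); last ring.
by rewrite subrr.
Qed.

Lemma formulaRec (F : fieldType) (l : F) (hl : l != 0) c0 c1 : Rec l (Fm l c0 c1).
Proof.
move=> k; have [j hk] := parity k; rewrite /Fm; move: hk.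
case h: (odd _) => /= ->.
  have -> : j * 2 + 1 + 1 = (j + 1) * 2 by ring.
  have -> : j * 2 + 1 - 1 = j * 2 by ring.
  rewrite !oddE0 /=.
  rewrite (@div4 _ ((j + 1) * (j + 1))); last ring.
  rewrite (@div4 _ (j * j)); last ring.
  by symmetry; apply: lcomb => //; ring.
rewrite addr0.
have -> : j * 2 - 1 = (j - 1) * 2 + 1 by ring.
rewrite !oddE1 /=.
rewrite (@div4 _ (j * (j + 1))); last ring.
rewrite (@div4 _ ((j - 1) * j)); last ring.
by symmetry; apply: lcomb => //; ring.
Qed.

Ltac fext := apply: functional_extensionality => ?; apply: functional_extensionality => ?.

Section Ser.
Variables (R : realType) (theta : R).
Local Notation l := (lam theta).
Let hl : l != 0 := lam_neq0 theta.

Lemma zlU1 (f : series R) k :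
  zpow (@lU1 R) (@lU1inv R) k f = fun n m => f (n - k) m.
Proof.
apply: (@zpowE R _ _ (fun k => fun n m => f (n - k) m)) => [|k'|k']; fext; rewrite /lU1 /lU1inv.
- by rewrite subr0.
- congr f; lia.
- congr f; lia.
Qed.

Lemma zrU2 (f : series R) k :
  zpow (@rU2 R) (@rU2inv R) k f = fun n m => f n (m - k).
Proof.
apply: (@zpowE R _ _ (fun k => fun n m => f n (m - k))) => [|k'|k']; fext; rewrite /rU2 /rU2inv.
- by rewrite subr0.
- congr f; lia.
- congr f; lia.
Qed.

Lemma zlU2 (f : series R) k :
  zpow (lU2 theta) (lU2inv theta) k f = fun n m => l ^ (k * n) * f n (m - k).
Proof.
apply: (@zpowE R _ _ (fun k => fun n m => l ^ (k * n) * f n (m - k))) => [|k'|k']; fext; rewrite /lU2 /lU2inv.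
- by rewrite mul0r expr0z mul1r subr0.
- apply: lcomb => //; [ring | congr f; lia].
- apply: lcomb => //; [ring | congr f; lia].
Qed.

Lemma zrU1 (f : series R) k :
  zpow (rU1 theta) (rU1inv theta) k f = fun n m => l ^ (k * m) * f (n - k) m.
Proof.
apply: (@zpowE R _ _ (fun k => fun n m => l ^ (k * m) * f (n - k) m)) => [|k'|k']; fext; rewrite /rU1 /rU1inv.
- by rewrite mul0r expr0z mul1r subr0.
- apply: lcomb => //; [ring | congr f; lia].
- apply: lcomb => //; [ring | congr f; lia].
Qed.

End Ser.

Section Main.
Variables (R : realType) (theta : R).
Local Notation l := (lam theta).
Let hl : l != 0 := lam_neq0 theta.

Lemma H0_gen (f : series R) : H0_rho theta f ->
  (forall n m, l ^ (- n) * f n (m + 1) = l ^ m * f (n - 1) m) /\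
  (forall n m, f (n - 1) m = f n (m - 1)).
Proof.
move=> H; split => n m.
  have := congr1 (fun F => F n m) (H [:: ((1%:Z, 0%:Z), 1)]).
  by rewrite /lmul_rho /rmul /rmono /= /sadd /sscale /szero /lU2inv /rU1 !mul1r !addr0.
have := congr1 (fun F => F n m) (H [:: ((0%:Z, 1%:Z), 1)]).
rewrite /lmul_rho /rmul /rmono /= /sadd /sscale /szero /lU1 /rU2 !mul1r !addr0.
done.
Qed.

Lemma shiftB (f : series R) : (forall n m, f (n - 1) m = f n (m - 1)) ->
  forall n m, f n m = f 0 (n + m).
Proof.
move=> B.
have up : forall j : nat, forall n m, f n m = f (n + j%:Z) (m - j%:Z).
  elim=> [|j IH] n m; first by rewrite addr0 subr0.
  rewrite IH; have := B (n + j%:Z + 1) (m - j%:Z).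
  rewrite addrK => ->; congr f; lia.
have down : forall j : nat, forall n m, f n m = f (n - j%:Z) (m + j%:Z).
  elim=> [|j IH] n m; first by rewrite addr0 subr0.
  rewrite IH; have := B (n - j%:Z) (m + j%:Z + 1).
  rewrite addrK => <-; congr f; lia.
move=> [j|j] m.
  rewrite (up j 0 (Posz j + m)); congr f; lia.
rewrite (down j.+1 0 (Negz j + m)); congr f; rewrite NegzE; lia.
Qed.

Lemma H0_of (f : series R) (g : int -> R[i]) :
  (forall n m, f n m = g (n + m)) -> Rec l g -> H0_rho theta f.
Proof.
move=> hf hr; have gr := genRec hl hr.
have mono : forall a b, zpow (lU2 theta) (lU2inv theta) (- a) (zpow (@lU1 R) (@lU1inv R) b f)
   = rmono theta f a b.
  move=> a b; rewrite /rmono (zlU1 theta f b) (zlU2 theta) (zrU1 theta f a) (zrU2 theta); fext.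
  rewrite !hf.
  match goal with |- _ = _ * g ?X => set y := X end.
  match goal with |- _ * g ?X = _ => set x := X end.
  have -> : x = (y + a) + a by rewrite /x /y; ring.
  rewrite gr mulrA -expfzDr //; congr (_ ^ _ * g _); rewrite /y; ring.
elim=> [|[[a b] c] x IH] //=.
by rewrite IH /= mono.
Qed.

End Main.

Theorem mainTheorem5 (R : realType) (theta : R)
  (Htheta : forall q : rat, theta != ratr q)
  (phi : series R) :
  H0_rho theta phi <->
  (forall n m : int,
     phi n m =
       if ~~ odd (absz (n + m))
       then lam theta ^ ((m ^+ 2 + n ^+ 2 + 2 * m * n) %/ 4)%Z * phi 0 0
       else lam theta ^ ((m ^+ 2 + n ^+ 2 + 2 * m * n - 1) %/ 4)%Z * phi 0 1).
Proof.
have hl := lam_neq0 theta.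
split.
  move=> H; have [A B] := H0_gen H; have sh := shiftB theta B.
  have hr : Rec (lam theta) (fun t => phi 0 t).
    move=> k; have := A 0 k; rewrite oppr0 expr0z mul1r => ->.
    by rewrite sh; congr (_ * phi _ _); lia.
  move=> n m; rewrite sh.
  have := recFormula hl hr (n + m); rewrite /Fm /= => ->.
  by rewrite (_ : m ^+ 2 + n ^+ 2 + 2 * m * n = (n + m) ^+ 2) //; ring.
move=> H; apply: (@H0_of R theta phi (Fm (lam theta) (phi 0 0) (phi 0 1))); last exact: formulaRec.
move=> n m; rewrite H /Fm.
by rewrite (_ : m ^+ 2 + n ^+ 2 + 2 * m * n = (n + m) ^+ 2) //; ring.
Qed.
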